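(* Let $\Gamma$ be a group, $\alpha\in\mathrm{Aut}(\Gamma)$ and $\omega:\Gamma\times\Gamma\to\Gamma$, $\omega(g,h)=\alpha(g)$. The map $\kappa:\prod_{\mathbb Q_2}\Gamma\to K(\omega)$ sending $f:\mathbb Q_2\to\Gamma$ to the map $\{0,1\}^*\to\Gamma$, $u\mapsto\alpha^{-|u|}(f(u00\cdots))$, is a well-defined isomorphism of groups.
   Context: $\{0,1\}^*$ denotes the finite words over $\{0,1\}$ (including the empty word), $|u|$ the length of $u$; $\mathbb Q_2\subset\{0,1\}^{\mathbb N}$ is the set of eventually-zero sequences, each of the form $u00\cdots$ with $u\in\{0,1\}^*$. $\prod_{\mathbb Q_2}\Gamma$ is the group of all maps $\mathbb Q_2\to\Gamma$ under pointwise product. $K(\omega)$ is the group (pointwise product) of maps $a:\{0,1\}^*\to\Gamma$ with $a(u)=\omega(a(u0),a(u1))$ for all $u$. *)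

(* Defs.v *)
From mathcomp Require Import all_boot.
Set Implicit Arguments. Unset Strict Implicit. Unset Printing Implicit Defensive.

Definition is_group (G : Type) (mul : G -> G -> G) (one : G) (inv : G -> G) : Prop :=
  [/\ forall x y z, mul x (mul y z) = mul (mul x y) z,
      forall x, mul one x = x, forall x, mul x one = x,
      forall x, mul (inv x) x = one & forall x, mul x (inv x) = one].

Definition is_automorphism (G : Type) (mul : G -> G -> G) (alpha alphainv : G -> G) : Prop :=
  [/\ forall x y, alpha (mul x y) = mul (alpha x) (alpha y),
      cancel alpha alphainv & cancel alphainv alpha].

(* Q_2 : eventually-zero 0/1 sequences (false = 0, true = 1). *)
Definition eventually_zero (s : nat -> bool) : Prop :=
  exists N, forall n, N <= n -> s n = false.
Definition Q2 := {s : nat -> bool | eventually_zero s}.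

Definition pad (u : seq bool) : nat -> bool := fun n => nth false u n.
Lemma pad_ev (u : seq bool) : eventually_zero (pad u).
Proof. exists (size u) => n Hn; rewrite /pad nth_default //. Qed.
Definition padQ2 (u : seq bool) : Q2 := exist _ (pad u) (pad_ev u).

Definition inK (G : Type) (omega : G -> G -> G) (a : seq bool -> G) : Prop :=
  forall u, a u = omega (a (rcons u false)) (a (rcons u true)).

Definition kappa (G : Type) (alphainv : G -> G) (f : Q2 -> G) : seq bool -> G :=
  fun u => iter (size u) alphainv (f (padQ2 u)).

(* Main.v *)
Require Import Defs.
From mathcomp Require Import all_boot.
From mathcomp Require Import zify.
From Stdlib Require Import ProofIrrelevance FunctionalExtensionality ClassicalEpsilon.

Lemma Q2eq (x y : Q2) : proj1_sig x = proj1_sig y -> x = y.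
Proof. case: x => s hs; case: y => t ht /= E; subst t; f_equal; apply proof_irrelevance. Qed.

Lemma iter_cancel (G : Type) (f g : G -> G) : cancel f g -> forall n y, iter n g (iter n f y) = y.
Proof. move=> c; elim=> [|n IH] y //. by rewrite iterSr iterS c IH. Qed.

Lemma iter_hom (G : Type) (mul : G -> G -> G) (h : G -> G) :
  (forall x y, h (mul x y) = mul (h x) (h y)) ->
  forall n x y, iter n h (mul x y) = mul (iter n h x) (iter n h y).
Proof. move=> H; elim=> [|n IH] x y //=. by rewrite IH H. Qed.

Lemma mkseq_ext (s : nat -> bool) N M : (forall n, N <= n -> s n = false) -> N <= M ->
  mkseq s M = mkseq s N ++ nseq (M - N) false.
Proof.
move=> Hs HM; apply: (@eq_from_nth _ false).
  by rewrite size_cat size_mkseq !size_mkseq size_nseq; lia.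
move=> i; rewrite size_mkseq => Hi; rewrite nth_mkseq // nth_cat size_mkseq.
case: ltnP => h; first by rewrite nth_mkseq.
by rewrite nth_nseq; case: ltnP => _ //; apply: Hs.
Qed.

Lemma inK_shift (G : Type) (alpha : G -> G) (a : seq bool -> G) :
  inK (fun g h : G => alpha g) a -> forall k u, a u = iter k alpha (a (u ++ nseq k false)).
Proof.
move=> Ha; elim=> [|k IH] u /=; first by rewrite cats0.
rewrite Ha IH; congr (alpha (iter _ _ (a _))).
by rewrite -cats1 -catA.
Qed.

Arguments mkseq_ext {s N M}.
Arguments inK_shift {G alpha a}.

Theorem mainTheorem6 (G : Type) (mul : G -> G -> G) (one : G) (inv : G -> G)
  (alpha alphainv : G -> G) :
  is_group mul one inv ->
  is_automorphism mul alpha alphainv ->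
  let omega := fun g h : G => alpha g in
  [/\ (forall f : Q2 -> G, inK omega (kappa alphainv f)),
      (forall f g : Q2 -> G,
          kappa alphainv (fun x => mul (f x) (g x))
          = (fun u => mul (kappa alphainv f u) (kappa alphainv g u))),
      injective (kappa alphainv)
    & (forall a : seq bool -> G, inK omega a -> exists f : Q2 -> G, kappa alphainv f = a)].
Proof.
move=> _ [Hhom c1 c2] omega.
have Hinvhom : forall x y, alphainv (mul x y) = mul (alphainv x) (alphainv y).
  by move=> x y; apply: (can_inj c1); rewrite Hhom !c2.
have padr : forall u, padQ2 (rcons u false) = padQ2 u.
  move=> u; apply: Q2eq => /=; apply: functional_extensionality => n.
  rewrite /pad nth_rcons; case: ltnP => // h; rewrite nth_default //; by case: eqP.
have padsurj : forall x : Q2, exists u, x = padQ2 u.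
  case=> s [N HN]; exists (mkseq s N); apply: Q2eq => /=.
  apply: functional_extensionality => n; rewrite /pad.
  case: (ltnP n N) => h; first by rewrite nth_mkseq.
  by rewrite nth_default ?size_mkseq // HN.
split.
- move=> f u; rewrite /omega /kappa size_rcons padr /= c2 //.
- move=> f g; apply: functional_extensionality => u.
  by rewrite /kappa iter_hom.
- move=> f g E; apply: functional_extensionality => x.
  have [u ->] := padsurj x.
  have := congr1 (fun h => h u) E; rewrite /kappa => E'.
  have cc : forall n, cancel (iter n alphainv) (iter n alpha).
    by move=> n y; apply: iter_cancel.
  exact: (can_inj (cc _)) E'.
- move=> a Ha.
  pose N (x : Q2) := proj1_sig (constructive_indefinite_description _ (proj2_sig x)).
  have HN : forall x n, N x <= n -> proj1_sig x n = false.
    by move=> x; exact: (proj2_sig (constructive_indefinite_description _ (proj2_sig x))).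
  exists (fun x => iter (N x) alpha (a (mkseq (proj1_sig x) (N x)))).
  apply: functional_extensionality => u; rewrite /kappa.
  set x := padQ2 u.
  have Hu : forall n, size u <= n -> proj1_sig x n = false.
    by move=> n h; rewrite /= /pad nth_default.
  set M := maxn (N x) (size u).
  have e1 := mkseq_ext (HN x) (leq_maxl (N x) (size u)).
  have e2 := mkseq_ext Hu (leq_maxr (N x) (size u)).
  rewrite -/M in e1 e2.
  have hu : mkseq (sval x) (size u) = u by rewrite /= /pad mkseq_nth.
  rewrite hu in e2.
  rewrite (inK_shift Ha (M - N x) (mkseq (sval x) (N x))) -e1 -iterD.
  rewrite (inK_shift Ha (M - size u) u) -e2.
  have -> : N x + (M - N x) = size u + (M - size u).
    by rewrite /M; lia.
  by rewrite iterD iter_cancel.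
Qed.
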